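(* For every $n\ge0$, the simplex $\mathbf{\Delta}^n$ is cofibrant in the Thomason model structure on $\mathbf{Cpx}$.
   Context: A simplicial complex consists of a vertex set and a collection of nonempty finite subsets (simplices) containing all singletons and closed under nonempty subsets; maps are vertex functions preserving simplices; $\mathbf{Cpx}$ is the category. $\mathbf{\Delta}^n$ is the complex on $\{0,\dots,n\}$ in which every nonempty subset is a simplex. $\mathrm{Sing}(K)_n=\mathbf{Cpx}(\mathbf{\Delta}^n,K)$ with simplicial operators by precomposition; $\mathrm{Ex}$ is the right adjoint of barycentric subdivision of simplicial sets. Thomason model structure on $\mathbf{Cpx}$: $f$ is a weak equivalence iff $\mathrm{Sing}(f)$ is a weak homotopy equivalence, a fibration iff $\mathrm{Ex}^2\mathrm{Sing}(f)$ is a Kan fibration, and a cofibration iff it has the left lifting property against all trivial fibrations; cofibrant means the map from the empty complex is a cofibration. *)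

(* Defs.v *)
From HB Require Import structures.
From mathcomp Require Import all_boot.
From Stdlib Require Import ProofIrrelevance.
From Stdlib Require List.

Set Implicit Arguments.
Unset Strict Implicit.
Unset Printing Implicit Defensive.

Record cpx := Cpx {
  vert : Type;
  simp : (vert -> Prop) -> Prop;
  simp_ne : forall s, simp s -> exists v, s v;
  simp_fin : forall s, simp s -> exists l : list vert, forall v, s v -> List.In v l;
  simp_single : forall v, simp (fun w => w = v);
  simp_sub : forall s t, simp s -> (forall v, t v -> s v) -> (exists v, t v) -> simp t
}.

Definition img (A B : Type) (f : A -> B) (s : A -> Prop) : B -> Prop :=
  fun w => exists v, s v /\ f v = w.

Record cmap (K L : cpx) := CMap {
  cf :> vert K -> vert L;
  cf_simp : forall s, @simp K s -> @simp L (img cf s)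
}.

Lemma cmap_eq (K L : cpx) (f g : cmap K L) : cf f = cf g -> f = g.
Proof.
case: f => f hf; case: g => g hg /= e; subst g; congr CMap; exact: proof_irrelevance.
Qed.

Definition cmap_comp_proof (K L M : cpx) (g : cmap L M) (f : cmap K L) :
  forall s, @simp K s -> @simp M (img (fun v => g (f v)) s).
Proof.
move=> s hs; have h := cf_simp g (cf_simp f hs).
apply: (simp_sub h).
  by move=> w [v [sv <-]]; exists (f v); split=> //; exists v.
have [v sv] := simp_ne hs; by exists (g (f v)); exists v.
Qed.

Definition cmap_comp (K L M : cpx) (g : cmap L M) (f : cmap K L) : cmap K M :=
  CMap (@cmap_comp_proof K L M g f).

Lemma In_of_mem (T : eqType) (x : T) (s : seq T) : x \in s -> List.In x s.
Proof.
elim: s => [|a s IH] //=; rewrite in_cons => /orP [/eqP -> | /IH]; by [left | right].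
Qed.

Definition Delta (n : nat) : cpx.
Proof.
refine (@Cpx 'I_n.+1 (fun s => exists v, s v) _ _ _ _).
- by [].
- move=> s _; exists (enum 'I_n.+1) => v _; apply: In_of_mem; by rewrite mem_enum.
- by move=> v; exists v.
- by move=> s t _ _ h.
Defined.

Definition empty_cpx : cpx.
Proof.
refine (@Cpx Empty_set (fun _ => False) _ _ _ _).
- by [].
- by [].
- by case.
- by [].
Defined.

Definition from_empty (L : cpx) : cmap empty_cpx L.
Proof. by refine (@CMap empty_cpx L (fun v => match v with end) _). Defined.

(** * The simplex category: monotone maps [m] -> [n] *)

Definition monob m n (f : {ffun 'I_m.+1 -> 'I_n.+1}) : bool :=
  [forall i : 'I_m.+1, forall j : 'I_m.+1, (i <= j) ==> (f i <= f j)].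

Definition Mono (m n : nat) := {f : {ffun 'I_m.+1 -> 'I_n.+1} | monob f}.

Definition mono_fun m n (t : Mono m n) : 'I_m.+1 -> 'I_n.+1 := fun i => sval t i.

Lemma monoP m n (t : Mono m n) (i j : 'I_m.+1) : i <= j -> mono_fun t i <= mono_fun t j.
Proof.
move=> hij; rewrite /mono_fun; case: t => f /= /forallP /(_ i) /forallP /(_ j) /implyP; exact.
Qed.

Definition mono_id (n : nat) : Mono n n.
Proof.
exists [ffun i => i]; apply/forallP=> i; apply/forallP=> j; apply/implyP.
by rewrite !ffunE.
Defined.

Definition mono_comp m k n (t : Mono k n) (u : Mono m k) : Mono m n.
Proof.
exists [ffun i => mono_fun t (mono_fun u i)].
apply/forallP=> i; apply/forallP=> j; apply/implyP=> hij.
by rewrite !ffunE; apply: monoP; apply: monoP.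
Defined.

Definition face n (i : 'I_n.+2) : Mono n n.+1.
Proof.
exists [ffun t => lift i t].
apply/forallP=> a; apply/forallP=> b; apply/implyP=> hab.
by rewrite !ffunE /= leq_bump2.
Defined.

Definition const_mono n (e : 'I_2) : Mono n 1.
Proof.
exists [ffun _ => e]; apply/forallP=> a; apply/forallP=> b; apply/implyP=> _.
by rewrite !ffunE.
Defined.

(* raw simplicial data; [is_sset] states the functor axioms *)
Record sset := SSet {
  ss :> nat -> Type;
  act : forall m n, Mono m n -> ss n -> ss m
}.
Arguments act {s m n} t x.

Definition is_sset (X : sset) : Prop :=
  (forall n (x : X n), act (mono_id n) x = x) /\
  (forall m k n (t : Mono k n) (u : Mono m k) (x : X n),
      act (mono_comp t u) x = act u (act t x)).

Record smap (X Y : sset) := SMap {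
  sm :> forall n, X n -> Y n;
  sm_nat : forall m n (t : Mono m n) (x : X n), sm (act t x) = act t (sm x)
}.
Arguments sm {X Y} s {n} x.

Lemma sig_eq (A : Type) (P : A -> Prop) (a b : {x : A | P x}) :
  sval a = sval b -> a = b.
Proof.
case: a => a pa; case: b => b pb /= e; subst b; congr exist; exact: proof_irrelevance.
Qed.

Definition smap_comp (X Y Z : sset) (g : smap Y Z) (f : smap X Y) : smap X Z.
Proof.
refine (@SMap X Z (fun n x => g n (f n x)) _).
by move=> m n t x; rewrite !sm_nat.
Defined.

Definition Sing (K : cpx) : sset.
Proof.
refine (@SSet (fun n => cmap (Delta n) K) _).
move=> m n t x.
refine (@CMap (Delta m) K (fun i => x (mono_fun t i)) _).
move=> s [v sv].
have hs : @simp (Delta n) (img (mono_fun t) s) by exists (mono_fun t v); exists v.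
apply: (simp_sub (cf_simp x hs)).
- by move=> w [u [su <-]]; exists (mono_fun t u); split=> //; exists u.
- by exists (x (mono_fun t v)); exists v.
Defined.

Definition Sing_map (K L : cpx) (f : cmap K L) : smap (Sing K) (Sing L).
Proof.
refine (@SMap (Sing K) (Sing L) (fun n x => cmap_comp f x) _).
by move=> m n t x; apply: cmap_eq.
Defined.

(** Barycentric subdivision of Delta^n = nerve of the poset of nonempty
    subsets of [n]; its k-simplices are weakly increasing chains
    S_0 <= ... <= S_k of nonempty subsets. *)
Definition chainb n k (c : {ffun 'I_k.+1 -> {set 'I_n.+1}}) : bool :=
  [forall i, c i != set0] &&
  [forall i : 'I_k.+1, forall j : 'I_k.+1, (i <= j) ==> (c i \subset c j)].

Definition Chain n k := {c : {ffun 'I_k.+1 -> {set 'I_n.+1}} | chainb c}.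

(* simplicial operators of sd Delta^n *)
Definition pull n j k (c : Chain n k) (u : Mono j k) : Chain n j.
Proof.
exists [ffun t => sval c (mono_fun u t)].
case: c => c /= /andP [/forallP h1 /forallP h2]; apply/andP; split.
- by apply/forallP=> i; rewrite ffunE.
- apply/forallP=> i; apply/forallP=> j'; apply/implyP=> hij; rewrite !ffunE.
  by move: (h2 (mono_fun u i)) => /forallP /(_ (mono_fun u j')) /implyP; apply; apply: monoP.
Defined.

(* sd applied to a monotone map [m] -> [n] *)
Definition push m n k (t : Mono m n) (c : Chain m k) : Chain n k.
Proof.
exists [ffun i => [set mono_fun t x | x in sval c i]].
case: c => c /= /andP [/forallP h1 /forallP h2]; apply/andP; split.
- by apply/forallP=> i; rewrite ffunE imset_eq0.
- apply/forallP=> i; apply/forallP=> j; apply/implyP=> hij; rewrite !ffunE.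
  by apply: imsetS; move: (h2 i) => /forallP /(_ j) /implyP; apply.
Defined.

Lemma push_pull m n k j (t : Mono m n) (c : Chain m k) (u : Mono j k) :
  push t (pull c u) = pull (push t c) u.
Proof. by apply: val_inj; apply/ffunP=> i; rewrite /= !ffunE. Qed.

(** Ex X: Ex(X)_n = sSet(sd Delta^n, X) *)
Definition Ex_el (X : sset) (n : nat) : Type :=
  {x : forall k, Chain n k -> X k |
     forall j k (u : Mono j k) (c : Chain n k), x j (pull c u) = act u (x k c)}.

Definition Ex (X : sset) : sset.
Proof.
refine (@SSet (Ex_el X) _).
move=> m n t x; exists (fun k c => sval x k (push t c)).
by move=> j k u c; rewrite push_pull; case: x => x hx /=; apply: hx.
Defined.

Definition Ex_map_fun (X Y : sset) (g : smap X Y) n (x : Ex X n) : Ex Y n.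
Proof.
exists (fun k c => g k (sval x k c)).
by move=> j k u c; case: x => x hx /=; rewrite hx sm_nat.
Defined.

Definition Ex_map (X Y : sset) (g : smap X Y) : smap (Ex X) (Ex Y).
Proof.
refine (@SMap (Ex X) (Ex Y) (@Ex_map_fun X Y g) _).
by move=> m n t x; apply: sig_eq.
Defined.

(** Kan fibrations (horn lifting).  A horn Lambda^{n+1}_k -> X is a family
    of n-simplices x_i (i <> k; the value at i = k is ignored) agreeing on
    the pairwise intersections of the faces. *)
Definition kan_fib (X Y : sset) (p : smap X Y) : Prop :=
  forall n (k : 'I_n.+2) (x : 'I_n.+2 -> X n),
    (forall i j, i != k -> j != k -> forall m (t t' : Mono m n),
        (forall a, lift i (mono_fun t a) = lift j (mono_fun t' a)) ->
        act t (x i) = act t' (x j)) ->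
    forall y : Y n.+1, (forall i, i != k -> act (face i) y = p n (x i)) ->
    exists z : X n.+1, (forall i, i != k -> act (face i) z = x i) /\ p n.+1 z = y.

Definition pt : sset := @SSet (fun _ => unit) (fun _ _ _ _ => tt).

Definition to_pt (X : sset) : smap X pt.
Proof. by refine (@SMap X pt (fun _ _ => tt) _). Defined.

Definition is_kan (X : sset) : Prop := kan_fib (to_pt X).

Definition sDelta1 : sset := @SSet (fun n => Mono n 1) (fun m n t u => mono_comp u t).

Definition sprod (X Y : sset) : sset :=
  @SSet (fun n => (X n * Y n)%type) (fun m n t xy => (act t xy.1, act t xy.2)).

(* elementary (left) homotopy h ~ h' : Delta[1] x Y -> Z *)
Definition homotopic (Y Z : sset) (h h' : smap Y Z) : Prop :=
  exists H : smap (sprod sDelta1 Y) Z,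
    forall n (y : Y n), H n (const_mono n ord0, y) = h n y /\
                        H n (const_mono n ord_max, y) = h' n y.

Definition sset_weq (X Y : sset) (f : smap X Y) : Prop :=
  forall Z : sset, is_sset Z -> is_kan Z ->
    (forall g : smap X Z, exists h : smap Y Z, homotopic (smap_comp h f) g) /\
    (forall h h' : smap Y Z, homotopic (smap_comp h f) (smap_comp h' f) ->
                             homotopic h h').

Definition cpx_weq (K L : cpx) (f : cmap K L) : Prop := sset_weq (Sing_map f).

Definition cpx_fib (K L : cpx) (f : cmap K L) : Prop :=
  kan_fib (Ex_map (Ex_map (Sing_map f))).

Definition cpx_trivfib (K L : cpx) (f : cmap K L) : Prop :=
  cpx_weq f /\ cpx_fib f.

Definition cpx_cofib (K L : cpx) (f : cmap K L) : Prop :=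
  forall (X Y : cpx) (p : cmap X Y), cpx_trivfib p ->
  forall (u : cmap K X) (v : cmap L Y), (forall a, p (u a) = v (f a)) ->
  exists h : cmap L X, (forall a, h (f a) = u a) /\ (forall b, p (h b) = v b).

Definition cpx_cofibrant (L : cpx) : Prop := cpx_cofib (from_empty L).

(* Main.v *)
Require Import Defs.
From mathcomp Require Import all_boot.
From mathcomp Require Import zify.
From Stdlib Require Import FunctionalExtensionality PropExtensionality.
From Stdlib Require Import Relation_Operators.
Set Implicit Arguments. Unset Strict Implicit. Unset Printing Implicit Defensive.

Definition constc (K : cpx) (x0 : vert K) k : cmap (Delta k) K.
Proof.
refine (@CMap (Delta k) K (fun _ => x0) _).
move=> s [v sv]; apply: (simp_sub (simp_single x0)).
- by move=> w [u [_ <-]].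
- by exists x0; exists v.
Defined.

Definition constE1 (K : cpx) (x0 : vert K) k : Ex (Sing K) k.
Proof. exists (fun j _ => constc x0 j). by move=> j k' u c; apply: cmap_eq. Defined.

Definition constE2 (K : cpx) (x0 : vert K) k : Ex (Ex (Sing K)) k.
Proof. exists (fun j _ => constE1 x0 j). by move=> j k' u c; apply: sig_eq. Defined.

Lemma card_lt m k : k <= m -> #|[set x : 'I_m | x < k]| = k.
Proof.
move=> km; have -> : [set x : 'I_m | x < k] = [set widen_ord km y | y in 'I_k].
  apply/setP=> x; rewrite inE; apply/idP/imsetP => [xk|[y _ ->]]; last by rewrite /= ltn_ord.
  by exists (Ordinal xk) => //; apply: val_inj.
rewrite card_imset ?card_ord //; move=> a b /(congr1 val) /= e; exact: val_inj.
Qed.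

Section Lift.
Variables (X Y : cpx) (p : cmap X Y) (HK : cpx_fib p).
Variables (N : nat) (v : cmap (Delta N) Y) (x0 : vert X).
Let S := fun w => (exists i, v i = w) \/ w = p x0.
Hypothesis hS : @simp Y S.

Definition Fv (C : {set {set 'I_N.+2}}) : vert Y :=
  if [set: 'I_N.+2] \in C then v (inord (#|C|).-1) else p x0.

Lemma Fv_S C : S (Fv C).
Proof. rewrite /Fv; case: ifP => _; [left; eexists; reflexivity | by right]. Qed.

Definition mkY (j : nat) (f : 'I_j.+1 -> vert Y) (hf : forall a, S (f a)) : cmap (Delta j) Y.
Proof.
refine (@CMap (Delta j) Y f _).
move=> s [a sa]; apply: (simp_sub hS).
- by move=> w [b [_ <-]]; exact: hf.
- by exists (f a); exists a.
Defined.

Definition yS k (c : Chain N.+1 k) j (d : Chain k j) : cmap (Delta j) Y :=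
  @mkY j (fun a => Fv [set sval c i | i in sval d a]) (fun a => Fv_S _).

Definition yE1 k (c : Chain N.+1 k) : Ex (Sing Y) k.
Proof.
exists (fun j d => yS c d).
move=> j j' u d; apply: cmap_eq; apply: functional_extensionality => a /=.
by rewrite ffunE.
Defined.

Definition yE2 : Ex (Ex (Sing Y)) N.+1.
Proof.
exists (fun k c => yE1 c).
move=> j k u c; apply: sig_eq; apply: functional_extensionality_dep => j'.
apply: functional_extensionality => d.
apply: cmap_eq; apply: functional_extensionality => a /=.
rewrite ffunE -imset_comp; congr Fv; apply: eq_imset => i /=; by rewrite ffunE.
Defined.

Lemma hy i : i != ord0 -> act (face i) yE2 = Ex_map (Ex_map (Sing_map p)) N (constE2 x0 N).
Proof.
move=> _; apply: sig_eq; apply: functional_extensionality_dep => k.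
apply: functional_extensionality => c; apply: sig_eq.
apply: functional_extensionality_dep => j; apply: functional_extensionality => d.
apply: cmap_eq; apply: functional_extensionality => a /=.
rewrite /Fv; case: ifP => // /imsetP [l _]; rewrite ffunE => /setP /(_ i).
rewrite inE => /esym /imsetP [x _]; rewrite /mono_fun /= ffunE => e.
by move: (neq_lift i x); rewrite -e eqxx.
Qed.


Definition c0f : {ffun 'I_N.+1 -> {set 'I_N.+2}} :=
  [ffun i : 'I_N.+1 => [set x : 'I_N.+2 | x < i.+1 + (val i == N)]].

Lemma c0P : chainb c0f.
Proof.
apply/andP; split.
- apply/forallP => i; rewrite ffunE; apply/set0Pn; exists ord0; by rewrite inE.
- apply/forallP => i; apply/forallP => j; apply/implyP => hij; rewrite !ffunE.
  apply/subsetP => x; rewrite !inE => hx; apply: leq_trans hx _.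
  have := ltn_ord j; case: (val i =P N); case: (val j =P N) => /= *; lia.
Qed.

Definition d0f : {ffun 'I_N.+1 -> {set 'I_N.+1}} := [ffun a : 'I_N.+1 => [set i : 'I_N.+1 | N - a <= i]].

Lemma d0P : chainb d0f.
Proof.
apply/andP; split.
- apply/forallP => i; rewrite ffunE; apply/set0Pn; exists ord_max; by rewrite inE leq_subr.
- apply/forallP => i; apply/forallP => j; apply/implyP => hij; rewrite !ffunE.
  apply/subsetP => x; rewrite !inE => hx; apply: leq_trans hx; exact: leq_sub2l.
Qed.

Definition c0 : Chain N.+1 N := exist _ c0f c0P.
Definition d0 : Chain N N := exist _ d0f d0P.

Lemma card_c0 i : #|c0f i| = i.+1 + (val i == N).
Proof. rewrite ffunE card_lt //; have := ltn_ord i; case: (val i =P N) => /= *; lia. Qed.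

Lemma c0_inj : injective c0f.
Proof.
move=> i j e; have := card_c0 i; rewrite e card_c0 => h; apply: val_inj => /=.
move: h (ltn_ord i) (ltn_ord j); case: (val i =P N); case: (val j =P N) => /= *; lia.
Qed.

Lemma Fv_c0d0 a : Fv [set sval c0 i | i in sval d0 a] = v a.
Proof.
rewrite /Fv /=; case: ifP => [_|].
  rewrite card_imset; last exact: c0_inj.
  rewrite ffunE cardsCs card_ord.
  have -> : ~: [set i : 'I_N.+1 | N - a <= i] = [set i : 'I_N.+1 | i < N - a].
    by apply/setP => i; rewrite !inE -ltnNge.
  rewrite card_lt; last by apply: leq_trans (leq_subr _ _) _.
  have := ltn_ord a => ha.
  have -> : (N.+1 - (N - a)).-1 = a by lia.
  by rewrite inord_val.
move/negP; case; apply/imsetP; exists ord_max; first by rewrite ffunE inE leq_subr.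
apply/setP => x; rewrite ffunE !inE /= eqxx addn1.
by rewrite ltn_ord.
Qed.

Lemma act_const2 m (t t' : Mono m N) : act t (constE2 x0 N) = act t' (constE2 x0 N).
Proof. by apply: sig_eq. Qed.

Lemma lift_simplex : exists h : cmap (Delta N) X, forall a, p (h a) = v a.
Proof.
have [z [_ hz]] := HK (n := N) (k := ord0) (x := fun _ => constE2 x0 N)
  (fun i j _ _ m t t' _ => act_const2 t t') (y := yE2) hy.
exists (sval (sval z N c0) N d0) => a.
have := f_equal (fun w => (sval (sval w N c0) N d0 : cmap _ _) a) hz.
move=> /= ->; exact: Fv_c0d0.
Qed.

End Lift.

Definition Zc : sset := @SSet (fun _ => Prop) (fun _ _ _ x => x).

Lemma Zc_sset : is_sset Zc.
Proof. by split. Qed.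

Definition cmono m n (e : 'I_n.+1) : Mono m n.
Proof.
exists [ffun _ => e]; apply/forallP=> a; apply/forallP=> b; apply/implyP=> _.
by rewrite !ffunE.
Defined.

Lemma cmonoE m n (e : 'I_n.+1) a : mono_fun (cmono m e) a = e.
Proof. by rewrite /mono_fun /= ffunE. Qed.

Lemma Zc_kan : is_kan Zc.
Proof.
move=> n k x hx y _; exists (x (lift k ord0)); split; last by case: y.
move=> i ik /=.
have i0k : lift k ord0 != k by rewrite eq_sym neq_lift.
have [u eu _] := unlift_some i0k.
have ik' : i != k by [].
have [u' eu' _] := unlift_some (ik').
apply: (hx _ _ i0k ik 0 (cmono 0 u) (cmono 0 u')) => a; by rewrite !cmonoE -eu -eu'.
Qed.

Section Conn.
Variables (X Y : cpx) (p : cmap X Y).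

Definition edge (a b : vert Y) := @simp Y (fun w => w = a \/ w = b).
Definition conn := clos_refl_sym_trans (vert Y) edge.

Lemma conn_simp n (s : cmap (Delta n) Y) a b : conn (s a) (s b).
Proof.
apply: rst_step.
have hs := @cf_simp _ _ s (fun _ => True) (ex_intro _ ord0 I).
apply: (simp_sub hs) => [w [->|->]|]; [by exists a | by exists b | by exists (s a); left].
Qed.

Definition hY : smap (Sing Y) Zc.
Proof.
refine (@SMap (Sing Y) Zc (fun n s => exists x : vert X, conn (s ord0) (p x)) _).
move=> m n t s /=; apply: propositional_extensionality; split => [[x hx]|[x hx]]; exists x.
- exact: rst_trans (conn_simp s _ _) hx.
- exact: rst_trans (conn_simp s _ _) hx.
Defined.

Definition hT : smap (Sing Y) Zc.
Proof. by refine (@SMap (Sing Y) Zc (fun _ _ => True) _). Defined.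

Definition hTX : smap (sprod sDelta1 (Sing X)) Zc.
Proof. by refine (@SMap _ Zc (fun _ _ => True) _). Defined.

Lemma hom1 : homotopic (smap_comp hY (Sing_map p)) (smap_comp hT (Sing_map p)).
Proof.
exists hTX => n y; split => //=.
apply: propositional_extensionality; split => // _; exists (y ord0); exact: rst_refl.
Qed.

Hypothesis Hweq : cpx_weq p.

Lemma vertex_hit y0 : exists x, conn y0 (p x).
Proof.
have [_ inj] := Hweq Zc_sset Zc_kan.
have [H hH] := inj hY hT hom1.
pose yy : Sing Y 0 := constc y0 0.
have [e0 e1] := hH 0 yy.
pose w : sprod sDelta1 (Sing Y) 1 := (mono_id 1, constc y0 1).
have E e : H 0 (const_mono 0 e, yy) = H 1 w.
  rewrite -[RHS](sm_nat H (const_mono 0 e) w).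
  have -> : act (const_mono 0 e) w = (const_mono 0 e, yy).
    rewrite /w /=; congr pair; last exact: cmap_eq.
    apply: sig_eq; apply/ffunP => i; by rewrite /= !ffunE /mono_fun /= !ffunE.
  by [].
change (hY 0 yy); rewrite -e0 E -(E ord_max) e1 //.
Qed.

End Conn.

Lemma conn_hit (X Y : cpx) (p : cmap X Y) (HK : cpx_fib p) (a b : vert Y) :
  conn a b -> (exists x, p x = a) <-> (exists x, p x = b).
Proof.
have step : forall a b, edge a b -> (exists x, p x = a) -> (exists x, p x = b).
  move=> a' b' e [x hx].
  have hS : @simp Y (fun w => (exists i, (constc b' 0 : cmap (Delta 0) Y) i = w) \/ w = p x).
    apply: (simp_sub e) => [w [[i <-]|->]|]; [by right | by left | by exists b'; left; exists ord0].
  have [h hh] := lift_simplex HK hS.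
  by exists (h ord0); rewrite hh.
elim => {a b} [a b e|a|a b _ [h1 h2]|a b c _ [h1 h2] _ [h3 h4]].
- split; first exact: step.
  apply: step; apply: (simp_sub e) => [w [->|->]|]; [by right | by left | by exists a; right].
- by [].
- by split.
- by split => h; [apply: h3; apply: h1 | apply: h2; apply: h4].
Qed.

Theorem lemma6p1 (n : nat) : cpx_cofibrant (Delta n).
Proof.
move=> X Y p [Hweq HK] u v _.
have [x hx] := vertex_hit Hweq (v ord0).
have [x' hx'] : exists x', p x' = v ord0.
  by apply/(conn_hit HK (rst_sym _ _ _ _ hx)); exists x.
have hS : @simp Y (fun w => (exists i, v i = w) \/ w = p x').
  have hs := @cf_simp _ _ v (fun _ => True) (ex_intro _ ord0 I).
  apply: (simp_sub hs) => [w [[i <-]|->]|]; [by exists i | by exists ord0 | by exists (v ord0); right].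
have [h hh] := lift_simplex HK hS.
by exists h; split => [[]|].
Qed.
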